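(* For every integer $k\geq 0$, every $(2k+1)$-strong tournament is $(k+2)^{*}$-weakly connected.
   Context: A tournament is a digraph in which each pair of distinct vertices is joined by exactly one arc. A digraph is $m$-strong if it has more than $m$ vertices and remains strongly connected after deleting any set of fewer than $m$ vertices (equivalently, for each ordered pair $x,y$ there are $m$ internally disjoint $(x,y)$-paths). For distinct vertices $u,v$ of a digraph $D$, a weak $k^{*}$-container between $u$ and $v$ is a set of $k$ internally disjoint paths, each of which is either a $(u,v)$-path or a $(v,u)$-path (different paths may have different directions), whose union contains every vertex of $D$. $D$ is $k^{*}$-weakly connected if there is a weak $k^{*}$-container between every two distinct vertices of $D$. *)

(* Defs.v *)
From mathcomp Require Import all_boot.
Set Implicit Arguments. Unset Strict Implicit. Unset Printing Implicit Defensive.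

Section Digraphs.
Variables (T : finType) (e : rel T).

Definition tournament : Prop :=
  (forall x, ~~ e x x) /\ (forall x y, x != y -> (e x y (+) e y x)).

Definition strong_avoiding (S : {set T}) : Prop :=
  forall x y, x \notin S -> y \notin S ->
    connect [rel a b | [&& e a b, a \notin S & b \notin S]] x y.

Definition m_strong (m : nat) : Prop :=
  m < #|T| /\ forall S : {set T}, #|S| < m -> strong_avoiding S.

Definition dipath (x y : T) (q : seq T) : bool :=
  if q is z :: q' then [&& z == x, path e x q', last x q' == y & uniq q]
  else false.

Definition weak_container (k : nat) (u v : T) (P : seq (seq T)) : Prop :=
  [/\ size P = k, uniq P,
      all (fun q => dipath u v q || dipath v u q) P,
      (forall i j x, i < j < k -> x \in nth [::] P i -> x \in nth [::] P j ->
          x = u \/ x = v)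
    & forall x : T, exists2 q, q \in P & x \in q].

Definition weakly_connected_star (k : nat) : Prop :=
  forall u v : T, u != v -> exists P, weak_container k u v P.

End Digraphs.

(* Main.v *)
Require Import Defs.
From mathcomp Require Import all_boot zify.
Set Implicit Arguments. Unset Strict Implicit. Unset Printing Implicit Defensive.

Lemma t_irr (T : finType) (e : rel T) (te : tournament e) x : ~~ e x x.
Proof. by case: te. Qed.

Lemma t_asym (T : finType) (e : rel T) (te : tournament e) x y : e x y -> ~~ e y x.
Proof.
move=> exy; case: te => irr tot.
have nxy : x != y by apply: contraTneq exy => ->; exact: irr.
by move: (tot x y nxy); rewrite exy addTb.
Qed.

Lemma t_tot (T : finType) (e : rel T) (te : tournament e) x y : x != y -> ~~ e x y -> e y x.
Proof. by case: te => _ tot nxy nexy; move: (tot x y nxy); rewrite (negbTE nexy) addFb. Qed.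

Lemma cross (T : eqType) (r : rel T) (P : pred T) a p :
  path r a p -> P a -> ~~ P (last a p) -> exists a' b', [/\ r a' b', P a' & ~~ P b'].
Proof.
elim: p a => [|b p IH] a /=; first by move=> _ ->.
case/andP=> rab pp Pa; case Pb: (P b); first exact: IH.
by move=> _; exists a, b; rewrite Pb.
Qed.

Lemma ins_path (T : finType) (e : rel T) (te : tournament e) a w z p :
  path e a p -> e a w -> w \notin p -> z \in p -> e w z ->
  exists p', [/\ path e a p', last a p' = last a p & perm_eq p' (w :: p)].
Proof.
elim: p a => [|b p IH] a //= /andP[eab pp] eaw.
rewrite inE negb_or => /andP[nwb nwp]; rewrite inE => zin ewz.
case ewb: (e w b).
  by exists (w :: b :: p); split => //=; rewrite eaw ewb pp.
have ebw : e b w by apply: (t_tot te) => //; rewrite ewb.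
have zp : z \in p.
  by case/orP: zin => [/eqP zb|//]; subst; rewrite ewz in ewb.
have [p' [pp' lp' pe]] := IH b pp ebw nwp zp ewz.
exists (b :: p'); split => /=; first by rewrite eab pp'.
  exact: lp'.
rewrite -(perm_cons b) in pe; apply: (perm_trans pe).
by rewrite (perm_catCA [:: b] [:: w] p).
Qed.

Lemma er_path (T : finType) (e : rel T) (S : {set T}) a p :
  path [rel x y | [&& e x y, x \notin S & y \notin S]] a p ->
  path e a p /\ all (fun b => b \notin S) p.
Proof.
elim: p a => [|b p IH] a //= /andP[/and3P[eab _ nb] pp].
by have [-> ->] := IH b pp; rewrite eab nb.
Qed.

Lemma insert_cycle (T : finType) (e : rel T) (te : tournament e) c w y z :
  uniq c -> cycle e c -> w \notin c -> y \in c -> z \in c -> e y w -> e w z ->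
  exists c', [/\ uniq c', cycle e c', {subset c' <= w :: c} & size c < size c'].
Proof.
move=> uc cc wc yc zc eyw ewz.
case: (rot_to yc) => i s Ec.
have ucr : uniq (y :: s) by rewrite -Ec rot_uniq.
have ccr : cycle e (y :: s) by rewrite -Ec rot_cycle.
have memr : forall x, (x \in c) = (x \in y :: s) by move=> x; rewrite -Ec mem_rot.
have scs : size c = (size s).+1 by rewrite -(size_rot i) Ec.
have [p' [pp lp pe]] : exists p', [/\ path e y p', last y p' = last y (rcons s y)
                                  & perm_eq p' (w :: rcons s y)].
  apply: (ins_path te (z:=z)) => //; first by rewrite mem_rcons -memr.
  by rewrite mem_rcons -memr.
case/lastP: p' pp lp pe => [|q y'] pp lp pe.
  by move/perm_size: pe; rewrite /= size_rcons.
rewrite !last_rcons in lp; subst y'.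
exists (y :: q); split.
- have : uniq (rcons q y).
    rewrite (perm_uniq pe) /= rcons_uniq mem_rcons -memr wc /=.
    by move: ucr => /= /andP[-> ->].
  by rewrite rcons_uniq.
- exact: pp.
- move=> x; rewrite -mem_rcons (perm_mem pe) inE mem_rcons -memr => /orP[/eqP->|xc].
    by rewrite mem_head.
  by rewrite inE xc orbT.
  by move/perm_size: pe; rewrite /= !size_rcons scs => ->.
Qed.

Lemma skip_cycle (T : finType) (e : rel T) (te : tournament e) c a b :
  c != [::] -> uniq c -> cycle e c -> a \notin c -> b \notin c -> all (fun y => e y a) c ->
  all (fun y => e b y) c -> e a b ->
  exists c', [/\ uniq c', cycle e c', {subset c' <= a :: b :: c} & size c < size c'].
Proof.
move=> nc uc cc ac bc allA allB eab.
case: c nc uc cc ac bc allA allB => [|c0 [|c1 rest]] //.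
  by move=> _ _ /= /andP[]; rewrite (negbTE (t_irr te c0)).
move=> _ uc cc ac bc allA allB.
exists [:: c0, a, b & rest]; split.
- move: uc ac bc; rewrite /= !inE !negb_or => /andP[/andP[n01 n0r] /andP[n1r ur]].
  move=> /and3P[na0 na1 nar] /and3P[nb0 nb1 nbr].
  have nab : a != b by apply: contraTneq eab => ->; exact: t_irr.
  by rewrite eq_sym na0 eq_sym nb0 n0r nab nar nbr ur.
- move: cc => /= /andP[e01 pr].
  have -> : e c0 a by move: allA => /= /andP[].
  rewrite eab /=.
  have sub : {subset rcons rest c0 <= [:: c0, c1 & rest]}.
    by move=> x; rewrite mem_rcons !inE => /orP[->|->]; rewrite ?orbT.
  move: pr sub; case: (rcons rest c0) => [|h r] //= /andP[_ ->] sub; rewrite andbT.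
  by move/allP: allB; apply; apply: sub; rewrite mem_head.
- by move=> x; rewrite !inE => /or4P[->|->|->|->]; rewrite ?orbT.
- by [].
Qed.

Lemma extend (T : finType) (e : rel T) (te : tournament e) (S : {set T})
  (str : strong_avoiding e S) c x :
  c != [::] -> uniq c -> cycle e c -> {subset c <= [pred y | y \notin S]} ->
  x \notin S -> x \notin c ->
  exists c', [/\ uniq c', cycle e c', {subset c' <= [pred y | y \notin S]} & size c < size c'].
Proof.
move=> nc uc cc cS xS xc.
case: (boolP [exists w, [&& w \notin S, w \notin c, has (fun y => e y w) c & has (fun z => e w z) c]]).
  case/existsP => w /and4P[wS wc /hasP[y yc eyw] /hasP[z zc ewz]].
  have [c' [uc' cc' sub sz]] := insert_cycle te uc cc wc yc zc eyw ewz.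
  exists c'; split => // v /sub; rewrite inE => /orP[/eqP->//|]; exact: cS.
move=> none.
have cat : forall w, w \notin S -> w \notin c ->
    all (fun y => e y w) c || all (fun y => e w y) c.
  move=> w wS wc; move/existsPn: none => /(_ w); rewrite wS wc /= negb_and.
  case/orP=> nh; [apply/orP; right|apply/orP; left]; apply/allP => y yc;
    (have nyw : y != w by apply: contraNneq wc => <-);
    move/hasPn: nh => /(_ y yc) nh; apply: (t_tot te) => //.
  by rewrite eq_sym.
have c0c : head x c \in c by move: nc; case: (c) => // h t _; rewrite mem_head.
set c0 := head x c in c0c.
have [a [b [[aS bS ac bc] [allA allB eab]]]] : exists a b, [/\ a \notin S, b \notin S, a \notin c & b \notin c]
     /\ [/\ all (fun y => e y a) c, all (fun y => e b y) c & e a b].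
  case/orP: (cat x xS xc) => allx.
  - have := str x c0 xS (cS _ c0c); case/connectP => p pp lp.
    have [a' [b' [/and3P[eab' a'S b'S] /andP[a'c allA'] Pb]]] :=
      @cross _ _ [pred w | (w \notin c) && all (fun y => e y w) c] _ _ pp
        ltac:(by rewrite /= xc allx) ltac:(by rewrite -lp /= c0c).
    case: (boolP (b' \in c)) => b'c.
      by move/allP: allA' => /(_ b' b'c) eba; rewrite (negbTE (t_asym te eab')) in eba.
    rewrite /= b'c /= in Pb.
    have := cat b' b'S b'c; rewrite (negbTE Pb) /= => allB'.
    by exists a', b'.
  - have := str c0 x (cS _ c0c) xS; case/connectP => p pp lp.
    have nP : ~~ ((x \in c) || all (fun y => e y x) c).
      rewrite (negbTE xc) /=; apply/negP => /allP /(_ c0 c0c) ec0x.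
      by move/allP: allx => /(_ c0 c0c) exc0; rewrite (negbTE (t_asym te exc0)) in ec0x.
    have [a' [b' [/and3P[eab' a'S b'S] Pa Pb]]] :=
      @cross _ _ [pred w | (w \in c) || all (fun y => e y w) c] _ _ pp
        ltac:(by rewrite /= c0c) ltac:(by rewrite -lp).
    rewrite /= negb_or in Pb; case/andP: Pb => b'c nb.
    have := cat b' b'S b'c; rewrite (negbTE nb) /= => allB'.
    case: (boolP (a' \in c)) => a'c.
      by move/allP: allB' => /(_ a' a'c) eba; rewrite (negbTE (t_asym te eab')) in eba.
    rewrite /= (negbTE a'c) /= in Pa.
    by exists a', b'.
have [c' [uc' cc' sub sz]] := skip_cycle te nc uc cc ac bc allA allB eab.
exists c'; split => // v /sub; rewrite !inE => /or3P[/eqP->|/eqP->|]//; exact: cS.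
Qed.

Lemma camion (T : finType) (e : rel T) (te : tournament e) (S : {set T})
  (str : strong_avoiding e S) u v :
  u \notin S -> v \notin S -> u != v ->
  exists c, [/\ uniq c, cycle e c & forall x, (x \in c) = (x \notin S)].
Proof.
move=> uS vS nuv.
have [c [nc uc cc cS]] :
    exists c, [/\ c != [::], uniq c, cycle e c & {subset c <= [pred y | y \notin S]}].
  wlog euv : u v uS vS nuv / e u v.
    move=> H; case euv: (e u v); first exact: (H u v).
    apply: (H v u) => //; first by rewrite eq_sym.
    by apply: (t_tot te) nuv _; rewrite euv.
  have := str v u vS uS; case/connectP => p pp.
  case: (shortenP pp) => p' pp' up' _ lp'.
  have [pe allS] := er_path pp'.
  exists (v :: p'); split => //.
    by rewrite /= rcons_path pe -lp' euv.
  move=> x; rewrite inE => /orP[/eqP->//|xp]; exact: (allP allS).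
have szc : forall c : seq T, uniq c -> size c <= #|T|.
  by move=> c1 uc1; rewrite -(card_uniqP uc1); exact: max_card.
suff : forall n c, #|T| - size c <= n -> c != [::] -> uniq c -> cycle e c ->
    {subset c <= [pred y | y \notin S]} ->
    exists c, [/\ uniq c, cycle e c & forall x, (x \in c) = (x \notin S)].
  by move/(_ _ c (leqnn _)); apply.
elim=> [|n IH] c0 hn nc0 uc0 cc0 cS0;
  (case: (boolP [exists x, (x \notin S) && (x \notin c0)]) =>
     [/existsP[x /andP[xS xc]]|/existsPn H]; last first).
- exists c0; split => // x; apply/idP/idP => [/cS0 //|xS].
  by move: (H x); rewrite xS /= negbK.
- have [c' [uc' cc' sub sz]] := extend te str nc0 uc0 cc0 cS0 xS xc.
  have h : size c' <= #|T| by apply: szc.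
  exfalso; lia.
- exists c0; split => // x; apply/idP/idP => [/cS0 //|xS].
  by move: (H x); rewrite xS /= negbK.
- have [c' [uc' cc' sub sz]] := extend te str nc0 uc0 cc0 cS0 xS xc.
  have hc' : size c' <= #|T| by apply: szc.
  apply: (IH c') => //; first lia.
  by case: c' {uc' cc' sub hc'} sz.
Qed.

Lemma short3 (T : finType) (e : rel T) (te : tournament e) (Z : {set T})
  (str : strong_avoiding e Z) u v :
  u \notin Z -> v \notin Z -> u != v ->
  (exists x, [/\ x \notin Z, x != u, x != v & (e u x && e x v) || (e v x && e x u)]) \/
  (exists b c, [/\ b \notin Z, c \notin Z, [&& b != u, b != v, c != u & c != v]
     & (e u b && e b c && e c v) || (e v b && e b c && e c u)]).
Proof.
move=> uZ vZ nuv.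
wlog euv : u v uZ vZ nuv / e u v.
  move=> H; case euv: (e u v); first exact: H.
  have evu : e v u by apply: (t_tot te) nuv _; rewrite euv.
  have := H v u vZ uZ ltac:(by rewrite eq_sym) evu.
  case=> [[x [xZ xv xu h]]|[b [c [bZ cZ /and4P[bv bu cv cu] h]]]].
    by left; exists x; split => //; rewrite orbC.
  by right; exists b, c; split => //; [rewrite bu bv cu cv | rewrite orbC].
have := str v u vZ uZ; case/connectP => p pp lp.
have [a [b [/and3P[eab aZ bZ] Pa Pb]]] :=
  @cross _ _ [pred w | (w == v) || [&& w != u, e u w & e v w]] _ _ pp
    ltac:(by rewrite /= eqxx) ltac:(by rewrite -lp /= eqxx (negbTE nuv)).
move: Pb; rewrite /= negb_or => /andP[nbv nb].
case/orP: Pa => [/eqP av|/and3P[nau eua eva]].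
  subst a.
  have nbu : b != u.
    by apply: contraTneq eab => ->; exact: (t_asym te euv).
  rewrite nbu eab /= ?andbT in nb.
  have ebu : e b u by apply: (t_tot te) nb; rewrite eq_sym.
  by left; exists b; split => //; rewrite eab ebu orbT.
have nbu : b != u by apply: contraTneq eab => ->; exact: (t_asym te eua).
have nav : a != v by apply: contraTneq eva => ->; exact: (t_irr te).
rewrite nbu /= in nb.
case eub: (e u b).
  rewrite eub /= in nb.
  have ebv : e b v by apply: (t_tot te) nb; rewrite eq_sym.
  by left; exists b; split => //; rewrite eub ebv.
have ebu : e b u by apply: (t_tot te); rewrite ?eub // eq_sym.
case evb: (e v b).
  by left; exists b; split => //; rewrite evb ebu orbT.
have ebv : e b v by apply: (t_tot te); rewrite ?evb // eq_sym.
right; exists a, b; split => //; first by rewrite nau nav nbu nbv.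
by rewrite eva eab ebu orbT.
Qed.

Definition intr (T : eqType) (u v : T) (q : seq T) := [seq w <- q | (w != u) && (w != v)].

Lemma short_path (T : finType) (e : rel T) (te : tournament e) (Z : {set T})
  (str : strong_avoiding e Z) u v :
  u \notin Z -> v \notin Z -> u != v ->
  exists q, [/\ dipath e u v q || dipath e v u q, intr u v q != [::],
     uniq (intr u v q), size (intr u v q) <= 2 & all (fun w => w \notin Z) (intr u v q)].
Proof.
move=> uZ vZ nuv; have nvu : v != u by rewrite eq_sym.
case: (short3 te str uZ vZ nuv) => [[x [xZ xu xv h]]|[b [c [bZ cZ /and4P[bu bv cu cv] h]]]].
  have ux : u != x by rewrite eq_sym.
  have vx : v != x by rewrite eq_sym.
  case/orP: h => /andP[h1 h2].
    exists [:: u; x; v]; rewrite /intr /dipath /= !eqxx xu xv /= !inE !negb_or ux nuv xv h1 h2 /= ?andbF /=.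
    by rewrite xZ.
  exists [:: v; x; u]; rewrite /intr /dipath /= !eqxx xu xv /= !inE !negb_or vx nvu xu h1 h2 /= ?andbF /=.
  by rewrite xZ orbT.
have ub : u != b by rewrite eq_sym.
have vb : v != b by rewrite eq_sym.
have uc : u != c by rewrite eq_sym.
have vc : v != c by rewrite eq_sym.
have bc : b != c.
  by case/orP: h => /andP[/andP[_ ebc] _]; apply: contraTneq ebc => ->; exact: t_irr.
case/orP: h => /andP[/andP[h1 h2] h3].
  exists [:: u; b; c; v]; rewrite /intr /dipath /= !eqxx bu bv cu cv /= !inE !negb_or ub uc nuv bc bv cv h1 h2 h3 /= ?andbF /=.
  by rewrite bZ cZ.
exists [:: v; b; c; u]; rewrite /intr /dipath /= !eqxx bu bv cu cv /= !inE !negb_or vb vc nvu bc bu cu h1 h2 h3 /= ?andbF /=.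
by rewrite inE bc bZ cZ orbT.
Qed.

Lemma uniq_flat_map (T : eqType) (f : seq T -> seq T) (L : seq (seq T)) :
  uniq (flatten (map f L)) -> all (fun q => f q != [::]) L -> uniq L.
Proof.
elim: L => [|q L IH] //=; rewrite cat_uniq => /and3P[_ hq uL] /andP[nq aL].
rewrite IH // andbT; apply/negP => qL; move: hq nq.
case E: (f q) => [|w r] // /hasPn H _.
have : w \in flatten [seq f i | i <- L].
  by apply/flattenP; exists (f q); [exact: map_f|rewrite E mem_head].
by move/H; rewrite mem_head.
Qed.

Lemma nth_disj (T : eqType) (L : seq (seq T)) i j x :
  uniq (flatten L) -> i < j -> j < size L ->
  x \in nth [::] L i -> x \in nth [::] L j -> False.
Proof.
elim: L i j => [|q L IH] i j //=; rewrite cat_uniq => /and3P[_ hq uL].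
case: i => [|i]; case: j => [|j] //= hij hj.
  move=> xq xj; move/hasPn: hq => /(_ x) H.
  have : x \in flatten L by apply/flattenP; exists (nth [::] L j) => //; exact: mem_nth.
  by move/H; rewrite xq.
by move=> xi xj; apply: (IH i j).
Qed.

Lemma mem_intr_flat (T : eqType) (u v : T) (sh : seq (seq T)) x :
  x \in flatten (map (intr u v) sh) -> (x != u) && (x != v).
Proof. by case/flattenP => r /mapP[q _ ->]; rewrite mem_filter => /andP[]. Qed.

Lemma shorts_ex (T : finType) (e : rel T) (te : tournament e) k u v
  (ms : m_strong e (2 * k + 1)) : u != v -> forall j, j <= k ->
  exists sh : seq (seq T), [/\ size sh = j,
    all (fun q => dipath e u v q || dipath e v u q) sh,
    uniq (flatten (map (intr u v) sh)),
    size (flatten (map (intr u v) sh)) <= 2 * j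
    & all (fun q => intr u v q != [::]) sh].
Proof.
move=> nuv; elim=> [|j IH] hj; first by exists [::].
have [sh [szsh dsh ush zsh nesh]] := IH (ltnW hj).
set z := flatten (map (intr u v) sh) in ush zsh.
pose Z := [set x in z].
have cZ : #|Z| < 2 * k + 1.
  have : #|Z| <= size z by rewrite cardsE; exact: card_size.
  lia.
have str := ms.2 Z cZ.
have uZ : u \notin Z by rewrite inE; apply/negP => /mem_intr_flat; rewrite eqxx.
have vZ : v \notin Z by rewrite inE; apply/negP => /mem_intr_flat; rewrite eqxx andbF.
have [q [dq neq uq szq aq]] := short_path te str uZ vZ nuv.
exists (q :: sh); split => /=.
- by rewrite szsh.
- by rewrite dq dsh.
- rewrite cat_uniq uq ush andbT; apply/hasPn => w wz; apply/negP => wq.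
  by move/allP: aq => /(_ w wq); rewrite inE wz.
- by rewrite size_cat mulnS; exact: leq_add.
- by rewrite neq nesh.
Qed.

Theorem theorem2p7 (T : finType) (e : rel T) (k : nat) :
  tournament e -> m_strong e (2 * k + 1) -> weakly_connected_star e (k + 2).
Proof.
move=> te ms u v nuv.
have [sh [szsh dsh ush zsh nesh]] := shorts_ex te ms nuv (leqnn k).
set z := flatten (map (intr u v) sh) in ush zsh.
pose Z := [set x in z].
have cZ : #|Z| < 2 * k + 1.
  have : #|Z| <= size z by rewrite cardsE; exact: card_size.
  lia.
have str := ms.2 Z cZ.
have uZ : u \notin Z by rewrite inE; apply/negP => /mem_intr_flat; rewrite eqxx.
have vZ : v \notin Z by rewrite inE; apply/negP => /mem_intr_flat; rewrite eqxx andbF.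
have [c [uc cc memc]] := camion te str uZ vZ nuv.
have uc_ : u \in c by rewrite memc.
case: (rot_to uc_) => i s Ec.
have vs : v \in s.
  have : v \in rot i c by rewrite mem_rot memc.
  by rewrite Ec inE eq_sym (negbTE nuv).
case/splitPr: vs Ec => s1 s2 Ec.
have ucr : uniq (u :: s1 ++ v :: s2) by rewrite -Ec rot_uniq.
have ccr : cycle e (u :: s1 ++ v :: s2) by rewrite -Ec rot_cycle.
have memr x : (x \in u :: s1 ++ v :: s2) = (x \notin Z) by rewrite -Ec mem_rot memc.
move: ucr; rewrite /= mem_cat inE negb_or cat_uniq /= => /and5P[/andP[us1 /norP[_ us2]] u1 /norP[vs1 hs12] vs2 u2].
move: ccr; rewrite /= rcons_cat /= cat_path /= => /andP[ps1 /andP[elv ps2]].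
pose p1 := u :: rcons s1 v.
pose p2 := v :: rcons s2 u.
have nvu : v != u by rewrite eq_sym.
have dp1 : dipath e u v p1.
  rewrite /dipath /p1 eqxx rcons_path ps1 elv last_rcons eqxx /=.
  by rewrite mem_rcons inE negb_or nuv us1 rcons_uniq vs1 u1.
have dp2 : dipath e v u p2.
  rewrite /dipath /p2 eqxx ps2 last_rcons eqxx /=.
  by rewrite mem_rcons inE negb_or nvu vs2 rcons_uniq us2 u2.
have ip1 : intr u v p1 = s1.
  rewrite /intr /p1 /= eqxx /= filter_rcons eqxx andbF.
  apply/all_filterP/allP => w ws; apply/andP; split.
    by apply: contraNneq us1 => <-.
  by apply: contraNneq vs1 => <-.
have ip2 : intr u v p2 = s2.
  rewrite /intr /p2 /= eqxx andbF filter_rcons eqxx /=.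
  apply/all_filterP/allP => w ws; apply/andP; split.
    by apply: contraNneq us2 => <-.
  by apply: contraNneq vs2 => <-.
have inZ : forall q, q \in sh -> forall w, w \in intr u v q -> w \in Z.
  by move=> q qsh w wq; rewrite inE; apply/flattenP; exists (intr u v q) => //; exact: map_f.
have s1Z : forall w, w \in s1 -> w \notin Z by move=> w ws; rewrite -memr inE mem_cat ws orbT.
have s2Z : forall w, w \in s2 -> w \notin Z.
  by move=> w ws; rewrite -memr inE mem_cat inE ws !orbT.
have notsh : forall p, (forall w, w \in intr u v p -> w \notin Z) -> p \notin sh.
  move=> p hp; apply/negP => psh.
  move/allP: nesh => /(_ p psh).
  case E: (intr u v p) => [|w r] // _.
  by move: (hp w) (inZ p psh w); rewrite E mem_head => /(_ isT) /negP + /(_ isT).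
have uflat : uniq (flatten (map (intr u v) [:: p1, p2 & sh])).
  rewrite !map_cons ip1 ip2 /= -/z catA cat_uniq cat_uniq u1 u2 ush /= andbT.
  apply/andP; split; first exact: hs12.
  rewrite andbT; apply/hasPn => w wz; rewrite mem_cat negb_or; apply/andP; split.
    by apply/negP => /s1Z; rewrite inE wz.
  by apply/negP => /s2Z; rewrite inE wz.
have up1 : u \in p1 by rewrite mem_head.
have vp2 : v \in p2 by rewrite mem_head.
have sp1 : {subset s1 <= p1} by move=> x xs; rewrite /p1 in_cons mem_rcons in_cons xs !orbT.
have sp2 : {subset s2 <= p2} by move=> x xs; rewrite /p2 in_cons mem_rcons in_cons xs !orbT.
have n12 : p1 != p2 by apply/eqP => -[] /eqP; rewrite (negbTE nuv).
clearbody p1 p2.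
exists [:: p1, p2 & sh]; split.
- by rewrite /= szsh addn2.
- rewrite /= inE negb_or (uniq_flat_map ush nesh) andbT.
  rewrite (notsh p1) ?(notsh p2) ?andbT; first last.
  + by rewrite ip1.
  + by rewrite ip2.
  by [].
- by rewrite /= dp1 dp2 orbT dsh.
- move=> i0 j x /andP[hij hj] xi xj.
  case: (boolP ((x != u) && (x != v))); last first.
    by rewrite negb_and !negbK => /orP[/eqP->|/eqP->]; [left|right].
  move=> xuv; exfalso.
  have hs : size [:: p1, p2 & sh] = k + 2 by rewrite /= szsh addn2.
  apply: (nth_disj (L := map (intr u v) [:: p1, p2 & sh]) (x := x) uflat hij).
  + by rewrite size_map hs.
  + rewrite (nth_map [::]) ?hs; last exact: ltn_trans hij hj.
    by rewrite mem_filter xuv.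
  + by rewrite (nth_map [::]) ?hs // mem_filter xuv.
- move=> x; case: (boolP (x \in Z)) => xZ.
    move: xZ; rewrite inE => /flattenP[r /mapP[q qsh ->]]; rewrite mem_filter => /andP[_ xq].
    by exists q => //; rewrite !inE qsh !orbT.
  move: xZ; rewrite -memr inE mem_cat inE => /or4P[/eqP->|xs|/eqP->|xs].
  + by exists p1; rewrite ?mem_head.
  + by exists p1; rewrite ?mem_head // sp1.
  + by exists p2; rewrite ?inE ?eqxx ?orbT.
  + by exists p2; rewrite ?inE ?eqxx ?orbT // sp2.
Qed.
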